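(* Let $G$ be a graph and $L$ an $m$-assignment for $G$. Suppose $uv\in E(G)$, $|L(u)-L(v)|=d\ge 1$, and that for any $x\in L(u)$ and $y\in L(v)$ with $x\ne y$ there are at least $C$ proper $L$-colorings of $G$ that color $u$ with $x$ and $v$ with $y$. Then \[P(G,L)\ge P_{DP}(G,m)+Cd.\]
   Context: An $m$-assignment $L$ assigns to each vertex $w$ a set $L(w)$ of $m$ colors; $P(G,L)$ is the number of proper colorings $f$ of $G$ with $f(w)\in L(w)$ for all $w$. A DP-cover of $G$ is a pair $\mathcal{H}=(L,H)$ where $H$ is a graph and $L:V(G)\to 2^{V(H)}$ such that $\{L(v):v\in V(G)\}$ partitions $V(H)$ into $|V(G)|$ parts, for every edge $uv$ of $G$ the edges of $H$ between $L(u)$ and $L(v)$ form a matching (possibly empty, not necessarily perfect), and every edge of $H$ lies between $L(u)$ and $L(v)$ for some edge $uv\in E(G)$. It is an $m$-fold cover if $|L(v)|=m$ for all $v$. A proper $\mathcal{H}$-coloring is an independent set of $H$ containing exactly one vertex of each $L(v)$; $P_{DP}(G,\mathcal{H})$ is their number, and the DP color function $P_{DP}(G,m)$ is the minimum of $P_{DP}(G,\mathcal{H})$ over all $m$-fold covers $\mathcal{H}$ of $G$. *)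

(* Defs.v *)
From mathcomp Require Import all_boot.
From Stdlib Require Import ClassicalEpsilon.
Set Implicit Arguments. Unset Strict Implicit. Unset Printing Implicit Defensive.

(* A graph G is (V, e) with V : finType and e : rel V (simplicity is imposed
   by hypotheses in the theorem). *)

Definition m_assignment (V Col : finType) (L : V -> {set Col}) (m : nat) : Prop :=
  forall v, #|L v| = m.

Definition proper_L_coloring (V Col : finType) (e : rel V) (L : V -> {set Col})
  (f : {ffun V -> Col}) : bool :=
  [forall v, f v \in L v] && [forall u, forall v, e u v ==> (f u != f v)].

Definition P_list (V Col : finType) (e : rel V) (L : V -> {set Col}) : nat :=
  #|[set f : {ffun V -> Col} | proper_L_coloring e L f]|.

Definition DP_cover (V : finType) (e : rel V) (W : finType) (eH : rel W)
  (LH : V -> {set W}) : Prop :=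
  (forall x y, eH x y = eH y x) /\ (forall x, ~~ eH x x) /\
  (forall w, exists! v, w \in LH v) /\
  (* for every edge uv of G, edges of H between LH u and LH v form a matching *)
  (forall u v, e u v ->
     (forall x y y', x \in LH u -> y \in LH v -> y' \in LH v ->
        eH x y -> eH x y' -> y = y') /\
     (forall x x' y, x \in LH u -> x' \in LH u -> y \in LH v ->
        eH x y -> eH x' y -> x = x')) /\
  (forall x y, eH x y -> exists u v, [/\ e u v, x \in LH u & y \in LH v]).

Definition m_fold_cover (V : finType) (e : rel V) (W : finType) (eH : rel W)
  (LH : V -> {set W}) (m : nat) : Prop :=
  DP_cover e eH LH /\ forall v, #|LH v| = m.

Definition proper_H_coloring (V W : finType) (eH : rel W) (LH : V -> {set W})
  (I : {set W}) : bool :=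
  [forall x in I, forall y in I, ~~ eH x y] && [forall v, #|I :&: LH v| == 1].

Definition P_DP_cover (V W : finType) (eH : rel W) (LH : V -> {set W}) : nat :=
  #|[set I : {set W} | proper_H_coloring eH LH I]|.

Definition DP_value (V : finType) (e : rel V) (m n : nat) : Prop :=
  exists (W : finType) (eH : rel W) (LH : V -> {set W}),
    m_fold_cover e eH LH m /\ P_DP_cover eH LH = n.

Definition DP_value_b (V : finType) (e : rel V) (m : nat) : pred nat :=
  fun n => if excluded_middle_informative (DP_value e m n) then true else false.

(* The trivial m-fold cover (no edges) shows the set of values is nonempty. *)
Lemma DP_value_exists (V : finType) (e : rel V) (m : nat) :
  exists n, DP_value_b e m n.
Proof.
pose W := (V * 'I_m)%type.
pose LH := fun v : V => [set w : W | w.1 == v].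
exists (P_DP_cover (fun _ _ : W => false) LH).
rewrite /DP_value_b; case: excluded_middle_informative => // H; exfalso; apply: H.
exists W, (fun _ _ => false), LH; split=> //; split.
- split=> //; split=> //; split.
  + move=> [v i]; exists v; split; first by rewrite inE.
    by move=> v'; rewrite inE => /eqP.
  + by split.
- move=> v; have -> : LH v = setX [set v] [set: 'I_m].
    by apply/setP => -[a b]; rewrite !inE andbT.
  by rewrite cardsX cards1 cardsT card_ord mul1n.
Qed.

Definition P_DP (V : finType) (e : rel V) (m : nat) : nat :=
  ex_minn (DP_value_exists e m).

(* Main.v *)
Require Import Defs.
From mathcomp Require Import all_boot.
From mathcomp Require Import zify.
From Stdlib Require Import ClassicalEpsilon.

Lemma swap_exists (Col : finType) (A B : {set Col}) (x0 : Col) :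
  #|A| = #|B| -> {in A, forall c, c \notin B} ->
  exists pi : Col -> Col, [/\ injective pi, {in A, forall c, pi c \in B} &
     (forall c, c \notin A -> c \notin B -> pi c = c)].
Proof.
move=> hAB hdis.
pose sA := enum A; pose sB := enum B.
have hsz : size sA = size sB by rewrite -!cardE.
have dAB := hdis.
pose s := sA ++ sB; pose t := sB ++ sA.
have us : uniq s.
  rewrite cat_uniq !enum_uniq /= andbT; apply/hasPn => c; rewrite mem_enum => cB.
  by rewrite mem_enum; apply/negP => cA; move: (dAB c cA); rewrite cB.
have ut : uniq t.
  rewrite cat_uniq !enum_uniq /= andbT; apply/hasPn => c; rewrite mem_enum => cA.
  by rewrite mem_enum; apply: dAB.
have szt : size t = size s by rewrite !size_cat addnC.
have memt : forall c, (c \in t) = (c \in s) by move=> c; rewrite !mem_cat orbC.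
pose pi := fun c => if c \in s then nth x0 t (index c s) else c.
exists pi; split.
- move=> c1 c2; rewrite /pi.
  case: ifP => h1; case: ifP => h2.
  + move/eqP; rewrite nth_uniq ?szt ?index_mem // => /eqP hi.
    by rewrite -(nth_index x0 h1) -(nth_index x0 h2) hi.
  + move=> h; move: h2; rewrite -h -memt mem_nth // szt index_mem //.
  + move=> h; move: h1; rewrite h -memt mem_nth // szt index_mem //.
  + by [].
- move=> c cA; rewrite /pi mem_cat mem_enum cA /= index_cat mem_enum cA /= nth_cat.
  have hi : index c sA < size sA by rewrite index_mem mem_enum.
  by rewrite -hsz hi -(mem_enum B) mem_nth // -hsz.
- by move=> c cA cB; rewrite /pi mem_cat !mem_enum (negbTE cA) (negbTE cB).
Qed.

Theorem lemma22 (V Col : finType) (e : rel V)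
  (e_sym : forall x y, e x y = e y x) (e_irr : forall x, ~~ e x x)
  (L : V -> {set Col}) (m : nat) (HL : m_assignment L m)
  (u v : V) (huv : e u v) (d C : nat)
  (hd : #|L u :\: L v| = d) (hd1 : 1 <= d)
  (hC : forall x y, x \in L u -> y \in L v -> x != y ->
     C <= #|[set f : {ffun V -> Col} | proper_L_coloring e L f && (f u == x) && (f v == y)]|) :
  P_DP e m + C * d <= P_list e L.
Proof.
have uv : u != v by apply/eqP => h; move: huv; rewrite h; move: (e_irr v) => /negbTE ->.
pose A := L u :\: L v; pose B := L v :\: L u.
have cardB : #|A| = #|B|.
  by rewrite /A /B cardsD [#|L v :\: _|]cardsD setIC !HL.
have /set0Pn [x0 _] : A != set0 by rewrite -card_gt0 hd.
have [pi [piinj piA pifix]] : exists pi : Col -> Col, [/\ injective pi, {in A, forall c, pi c \in B} &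
     (forall c, c \notin A -> c \notin B -> pi c = c)].
  apply: swap_exists x0 cardB _.
  by move=> c; rewrite !inE => /andP[_ ->].
pose W : finType := {p : V * Col | p.2 \in L p.1}.
have Wext : forall p q : W, (val p).1 = (val q).1 -> (val p).2 = (val q).2 -> p = q.
  by move=> [[a c] h] [[b c'] h'] /= e1 e2; apply: val_inj => /=; rewrite e1 e2.
pose LH := fun a : V => [set p : W | (val p).1 == a].
pose eH : rel W := fun p q => e (val p).1 (val q).1 &&
   (if ((val p).1 == u) && ((val q).1 == v) then pi (val p).2 == (val q).2
    else if ((val p).1 == v) && ((val q).1 == u) then pi (val q).2 == (val p).2
    else (val p).2 == (val q).2).
have vu : v != u by rewrite eq_sym.
have cover : m_fold_cover e eH LH m.
  split; last first.
    move=> a; rewrite -(HL a).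
    rewrite -(@card_in_imset _ _ (fun p : W => (val p).2)).
      apply: eq_card => c; apply/imsetP/idP.
        by move=> [p]; rewrite inE => /eqP <- ->; exact: (valP p).
      move=> ca; exists (exist (fun p : V * Col => p.2 \in L p.1) (a, c) ca) => //.
      by rewrite inE.
    move=> p q; rewrite !inE => /eqP pa /eqP qa h; apply: Wext => //; by rewrite pa qa.
  split.
    move=> [[a c] hc] [[b c'] hc']; rewrite /eH /= e_sym.
    case: (e b a) => //=.
    case au: (a == u); case bv: (b == v); case av: (a == v); case bu: (b == u) => //=;
      rewrite ?(eq_sym c') //.
    by rewrite -(eqP au) (eqP av) eqxx in uv.
  split; first by move=> x; rewrite /eH (negbTE (e_irr _)).
  split.
    move=> w; exists (val w).1; split; first by rewrite inE.
    by move=> a; rewrite inE => /eqP.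
  split; last first.
    by move=> x y /andP[exy _]; exists (val x).1, (val y).1; rewrite !inE !eqxx.
  move=> a b eab; split.
    move=> x y y'; rewrite !inE => /eqP xa /eqP ya /eqP y'a; rewrite /eH xa ya y'a eab /=.
    move=> h1 h2; apply: Wext; first by rewrite ya y'a.
    move: h1 h2; case: ifP => _; first by move=> /eqP <- /eqP <-.
    case: ifP => _; first by move=> /eqP h1 /eqP h2; apply: piinj; rewrite h1 h2.
    by move=> /eqP <- /eqP <-.
  move=> x x' y; rewrite !inE => /eqP xa /eqP x'a /eqP ya; rewrite /eH xa x'a ya eab /=.
  move=> h1 h2; apply: Wext; first by rewrite xa x'a.
  move: h1 h2; case: ifP => _; first by move=> /eqP h1 /eqP h2; apply: piinj; rewrite h1 h2.
  case: ifP => _; first by move=> /eqP <- /eqP <-.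
  by move=> /eqP -> /eqP ->.
pose PL := [set f : {ffun V -> Col} | proper_L_coloring e L f].
pose Bset := [set f : {ffun V -> Col} | proper_L_coloring e L f && (f u \in A) && (f v == pi (f u))].
pose If := fun f : {ffun V -> Col} => [set p : W | (val p).2 == f (val p).1].
have sub : [set I | proper_H_coloring eH LH I] \subset [set If f | f in PL :\: Bset].
  apply/subsetP => I; rewrite inE => /andP[/forallP hind /forallP hone].
  have hp : forall a, exists p, I :&: LH a = [set p].
    by move=> a; apply/cards1P; exact: hone a.
  pose f := [ffun a => if [pick p in I :&: LH a] is Some p then (val p).2 else x0].
  have hf : forall a, exists p, [/\ p \in I, (val p).1 = a, (val p).2 = f a &
       forall q, q \in I -> (val q).1 = a -> q = p].
    move=> a; have [p hpa] := hp a; exists p.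
    have : p \in I :&: LH a by rewrite hpa set11.
    rewrite !inE => /andP[pI /eqP pa]; split => //.
    - rewrite ffunE; case: pickP => [q|]; rewrite hpa.
        by rewrite inE => /eqP ->.
      by move=> /(_ p); rewrite set11.
    - by move=> q qI qa; apply/set1P; rewrite -hpa !inE qI qa eqxx.
  have hfL : forall a, f a \in L a.
    by move=> a; have [p [_ <- <- _]] := hf a; exact: (valP p).
  have hnE : forall p q, p \in I -> q \in I -> ~~ eH p q.
    by move=> p q pI qI; move: (hind p); rewrite pI /= => /forall_inP; apply.
  apply/imsetP; exists f.
    rewrite in_setD; apply/andP; split; last first.
      rewrite inE /proper_L_coloring; apply/andP; split; first by apply/forallP.
      apply/forallP => a; apply/forallP => b; apply/implyP => eab.
      apply/negP => /eqP fab.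
      have [pa [paI pa1 pa2 _]] := hf a; have [pb [pbI pb1 pb2 _]] := hf b.
      move: (hnE _ _ paI pbI); rewrite /eH pa1 pb1 pa2 pb2 fab eab /=.
      case: ifP => [/andP[/eqP au /eqP bv]|_].
        rewrite pifix ?eqxx //; rewrite !inE negb_and negbK; apply/orP.
          by left; move: (hfL b); rewrite bv.
        by left; move: (hfL b); rewrite -fab au.
      case: ifP => [/andP[/eqP av /eqP bu]|_]; last by rewrite eqxx.
      rewrite pifix ?eqxx //; rewrite !inE negb_and negbK; apply/orP.
        by left; move: (hfL b); rewrite -fab av.
      by left; move: (hfL b); rewrite bu.
    apply/negP; rewrite inE => /andP[/andP[_ fuA] /eqP fv].
    have [pa [paI pa1 pa2 _]] := hf u; have [pb [pbI pb1 pb2 _]] := hf v.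
    move: (hnE _ _ paI pbI); rewrite /eH pa1 pb1 pa2 pb2 huv !eqxx /= fv eqxx.
    by [].
  apply/setP => q; rewrite inE; apply/idP/eqP.
    move=> qI; have [p [pI p1 p2 puniq]] := hf (val q).1.
    by rewrite (puniq q qI erefl) p2 p1.
  move=> hq; have [p [pI p1 p2 puniq]] := hf (val q).1.
  suff -> : q = p by [].
  by apply: Wext; rewrite ?p1 // p2 hq.
have hB : C * d <= #|Bset|.
  rewrite -sum1_card (partition_big (fun f : {ffun V -> Col} => f u) (mem A)); last first.
    by move=> f; rewrite [_ \in Bset]inE => /andP[/andP[_ ]].
  have -> : C * d = \sum_(x in A) C by rewrite sum_nat_const mulnC hd.
  apply: leq_sum => x xA.
  rewrite sum1dep_card.
  have xu : x \in L u by move: xA; rewrite inE => /andP[].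
  have pB := piA x xA; move: (pB); rewrite inE => /andP[pxu pxv].
  apply: leq_trans (hC x (pi x) xu pxv _) _.
    by apply/eqP => hx; move: pxu; rewrite -hx xu.
  apply: subset_leq_card; apply/subsetP => f; rewrite !inE => /andP[/andP[pf /eqP fu] /eqP fv].
  by rewrite pf fu fv !eqxx !andbT /=; move: xA; rewrite inE.
have hBPL : Bset \subset PL by apply/subsetP => f; rewrite !inE => /andP[/andP[-> _] _].
have hPDP : P_DP e m <= P_DP_cover eH LH.
  rewrite /P_DP; case: ex_minnP => n0 _ hmin; apply: hmin.
  rewrite /DP_value_b; case: excluded_middle_informative => // [] [].
  by exists W, eH, LH.
have h1 : P_DP_cover eH LH <= #|PL :\: Bset|.
  exact: leq_trans (subset_leq_card sub) (leq_imset_card _ _).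
have h2 : #|PL :\: Bset| + #|Bset| = P_list e L.
  rewrite cardsD (setIidPr hBPL) subnK //; exact: subset_leq_card.
rewrite -h2; exact: leq_add (leq_trans hPDP h1) hB.
Qed.
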